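(* Let $s\le\ell$ be positive integers and $\tau\in\mathbb{Z}_{\ge0}$. Then a family $\lambda_{\mathbf{i}},\psi_{\mathbf{j}}\in\mathcal{R}$ ($\mathbf{i}\in\mathcal{I},\mathbf{j}\in\mathcal{J}$) is a solution of degree $\tau$ of Problem 1 if and only if the family of polynomials defined by $(\lambda_{\mathbf{i},0},\dots,\lambda_{\mathbf{i},q-1})=\nu(\lambda_{\mathbf{i}})$ and $(\psi_{\mathbf{j},0},\dots,\psi_{\mathbf{j},q-1})=\nu(\psi_{\mathbf{j}})$ is a monic solution of degree $\tau$ of Problem 2.
   Context: Let $q$ be a prime power; the Hermitian curve over $\mathbb{F}_{q^2}$ has affine equation $Y^q+Y=X^{q+1}$, genus $g=\tfrac12q(q-1)$, affine rational points $P_1,\dots,P_n$ ($n=q^3$) and point at infinity $P_\infty$. $\mathcal{R}=\bigcup_{m\ge0}\mathcal{L}(mP_\infty)=\mathbb{F}_{q^2}[X,Y]/(Y^q+Y-X^{q+1})$ with basis $\{X^iY^j:i\ge0,0\le j<q\}$; $\deg_{\mathcal{H}}f=-v_{P_\infty}(f)$, so $\deg_{\mathcal{H}}(X^iY^j)=iq+j(q+1)$; $f\ne0$ is monic if the coefficient of its basis monomial of largest $\deg_{\mathcal{H}}$ is $1$. Fix integers $h\ge1$ and $m_{\mathrm H}$ with $2(g-1)<m_{\mathrm H}<n$. For a received word $\mathbf{r}=(r_{i,j})\in\mathbb{F}_{q^2}^{h\times n}$ let $\mathbf{R}=(R_1,\dots,R_h)$, $R_i\in\mathcal{R}$, $\deg_{\mathcal{H}}R_i<n+2g$,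 $R_i(P_j)=r_{i,j}$; $G=X^{q^2}-X$. For $\mathbf{i},\mathbf{j}\in\mathbb{Z}_{\ge0}^h$: $|\mathbf{i}|=\sum_\mu i_\mu$, $\mathbf{i}\preceq\mathbf{j}$ componentwise, $\mathbf{a}^{\mathbf{i}}=\prod_\mu a_\mu^{i_\mu}$, $\binom{\mathbf{j}}{\mathbf{i}}=\prod_\mu\binom{j_\mu}{i_\mu}$. Let $\mathcal{I}=\{\mathbf{i}:|\mathbf{i}|<s\}$, $\mathcal{J}=\{\mathbf{j}:1\le|\mathbf{j}|\le\ell\}$, $A_{\mathbf{i},\mathbf{j}}=\binom{\mathbf{j}}{\mathbf{i}}\mathbf{R}^{\mathbf{j}-\mathbf{i}}G^{|\mathbf{i}|}$ ($=0$ if $\mathbf{i}\not\preceq\mathbf{j}$). Problem 1: a solution is a family $\lambda_{\mathbf{i}},\psi_{\mathbf{j}}\in\mathcal{R}$ with $\lambda_{\mathbf{0}}$ monic, $\psi_{\mathbf{j}}=\sum_{\mathbf{i}\in\mathcal{I}}\lambda_{\mathbf{i}}A_{\mathbf{i},\mathbf{j}}$ for $|\mathbf{j}|<s$, $\psi_{\mathbf{j}}\equiv\sum_{\mathbf{i}\in\mathcal{I}}\lambda_{\mathbf{i}}A_{\mathbf{i},\mathbf{j}}\bmod G^s$ for $|\mathbf{j}|\ge s$, $\deg_{\mathcal{H}}\lambda_{\mathbf{0}}\ge\deg_{\mathcal{H}}\lambda_{\mathbf{i}}-|\mathbf{i}|(2g-1)$ ($\mathbf{i}\in\mathcal{I}$),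 $\deg_{\mathcal{H}}\lambda_{\mathbf{0}}\ge\deg_{\mathcal{H}}\psi_{\mathbf{j}}-|\mathbf{j}|m_{\mathrm H}$ ($\mathbf{j}\in\mathcal{J}$); its degree is $\deg_{\mathcal{H}}\lambda_{\mathbf{0}}$. Vector representation: every $a\in\mathcal{R}$ is uniquely $a=\sum_{\iota=0}^{q-1}a_\iota Y^\iota$ with $a_\iota\in\mathbb{F}_{q^2}[X]$; $\nu(a)=(a_0,\dots,a_{q-1})$. Let $\mu(b)\in\mathbb{F}_{q^2}[X]^{q\times(2q-1)}$ have $(\iota,\iota+k)$ entry $b_k$ for $0\le\iota\le q-1$, $0\le k\le q-1$ and zeros elsewhere (rows indexed $0..q-1$, columns $0..2q-2$), and let $\Xi\in\mathbb{F}_{q^2}[X]^{(2q-1)\times q}$ have rows $0..q-1$ equal to the $q\times q$ identity and, for $0\le k\le q-2$, row $q+k$ with entry $X^{q+1}$ in column $k$, $-1$ in column $k+1$, zeros elsewhere. Then $\nu(ab)=\nu(a)\mu(b)\Xi$. Put $\hat A_{\mathbf{i},\mathbf{j}}=\mu(A_{\mathbf{i},\mathbf{j}})\Xi\in\mathbb{F}_{q^2}[X]^{q\times q}$. Write $[q)=\{0,\dots,q-1\}$. Problem 2: find $\lambda_{\mathbf{i},\iota},\psi_{\mathbf{j},\kappa}\in\mathbb{F}_{q^2}[X]$ ($\mathbf{i}\in\mathcal{I},\mathbf{j}\in\mathcal{J},\iota,\kappa\in[q)$), not all zero, such that, with $D=\max_{\iota\in[q)}\{q\deg\lambda_{\mathbf{0},\iota}+\iota(q+1)\}$: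 $\psi_{\mathbf{j},\kappa}=\sum_{\mathbf{i}\in\mathcal{I}}\sum_{\iota=0}^{q-1}\lambda_{\mathbf{i},\iota}(\hat A_{\mathbf{i},\mathbf{j}})_{\iota,\kappa}$ for $1\le|\mathbf{j}|<s$; $\psi_{\mathbf{j},\kappa}\equiv\sum_{\mathbf{i}\in\mathcal{I}}\sum_{\iota=0}^{q-1}\lambda_{\mathbf{i},\iota}(\hat A_{\mathbf{i},\mathbf{j}})_{\iota,\kappa}\bmod G^s$ for $s\le|\mathbf{j}|\le\ell$; $D\ge q\deg\lambda_{\mathbf{i},\iota}+\iota(q+1)-|\mathbf{i}|(2g-1)$ for all $\mathbf{i}\in\mathcal{I},\iota\in[q)$; $D\ge q\deg\psi_{\mathbf{j},\kappa}+\kappa(q+1)-|\mathbf{j}|m_{\mathrm H}$ for all $\mathbf{j}\in\mathcal{J},\kappa\in[q)$ (with $\deg 0=-\infty$). The degree of such a solution is $D$; it is monic if the leading coefficient of the $\lambda_{\mathbf{0},\iota}$ attaining the maximum in $D$ is $1$. *)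

(* Defs.v *)
From HB Require Import structures.
From mathcomp Require Import all_boot all_order all_algebra.
Set Implicit Arguments. Unset Strict Implicit. Unset Printing Implicit Defensive.
Import Order.TTheory GRing.Theory Num.Theory.
Local Open Scope ring_scope.

(* Bivariate polynomials: outer variable Y, inner variable X.
   The ring  R = F[X,Y]/(Y^q + Y - X^(q+1))  is modelled as {poly {poly F}}
   modulo the (Y-monic) polynomial herm q; every element of R has the reduced
   representative  nu q a  (remainder of division by herm q in Y), i.e.
   the vector representation  nu(a) = (a_0,...,a_{q-1}). *)
Notation BP F := {poly {poly F}}.

Section Hermitian.
Variable F : fieldType.
Variable q : nat.

Definition hX : BP F := ('X)%:P.
Definition hY : BP F := 'X.
Definition herm : BP F := hY ^+ q + hY - hX ^+ q.+1.

Definition nu (a : BP F) : BP F := Pdiv.Ring.rmodp a herm.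
Definition nuc (a : BP F) (k : nat) : {poly F} := (nu a)`_k.
Definition eqR (a b : BP F) : Prop := nu (a - b) = 0.
Definition dvdR (d a : BP F) : Prop := exists c : BP F, eqR a (d * c).
Definition coefH (a : BP F) (i j : nat) : F := (nuc a j)`_i.
Definition degH (a : BP F) : nat :=
  \max_(j < q) \max_(i < size (nuc a j) | coefH a i j != 0%R) (i * q + j * q.+1)%N.
Definition monicR (a : BP F) : Prop :=
  nu a != 0 /\
  forall i j : nat, (j < q)%N -> coefH a i j != 0 ->
    (i * q + j * q.+1)%N = degH a -> coefH a i j = 1.

Definition evalP (a : BP F) (P : F * F) : F := (a.[(P.2)%:P]).[P.1].

Definition Gpol : {poly F} := 'X^(q ^ 2)%N - 'X.
Definition Gb : BP F := Gpol%:P.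

Definition genus : nat := ((q * (q - 1))./2)%N.

Definition muM (b : BP F) : 'M[{poly F}]_(q, q.*2.-1) :=
  \matrix_(r < q, c < q.*2.-1)
     (if ((r <= c) && (c < r + q))%N then nuc b (c - r) else 0).
Definition XiM : 'M[{poly F}]_(q.*2.-1, q) :=
  \matrix_(r < q.*2.-1, c < q)
     (if (r < q)%N then ((r : nat) == c)%:R
      else if (c : nat) == (r - q)%N then 'X^(q.+1)
      else if (c : nat) == (r - q).+1 then -1 else 0).
End Hermitian.

(* multi-indices in Z_{>=0}^h; components bounded by l (enough for I and J, as s <= l) *)
Definition mi (h l : nat) := {ffun 'I_h -> 'I_l.+1}.
Definition mnorm h l (i : mi h l) : nat := (\sum_(mu < h) (i mu : nat))%N.
Definition mle h l (i j : mi h l) : bool := [forall mu, (i mu <= j mu)%N].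
Definition mzero h l : mi h l := [ffun => ord0].

Section Problems.
Variables (F : fieldType) (q h l s : nat) (mH : int) (Rv : 'I_h -> BP F).

Definition Amat (i j : mi h l) : BP F :=
  if mle i j then
    ((\prod_(mu < h) 'C(j mu, i mu))%N)%:R *
    (\prod_(mu < h) (Rv mu) ^+ (j mu - i mu)%N) * (Gb F q) ^+ (mnorm i)
  else 0.

Definition inI (i : mi h l) : bool := (mnorm i < s)%N.
Definition inJ (j : mi h l) : bool := (1 <= mnorm j <= l)%N.
Definition twog1 : int := (2 * genus q)%N%:Z - 1.

(* Problem 1: solution of degree tau; deg_H 0 = -oo, so constraints on
   zero elements are vacuous *)
Definition sol1 (lam psi : mi h l -> BP F) (tau : nat) : Prop :=
  monicR q (lam (mzero h l)) /\
  (forall j, inJ j -> (mnorm j < s)%N ->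
     eqR q (psi j) (\sum_(i | inI i) lam i * Amat i j)) /\
  (forall j, inJ j -> (s <= mnorm j)%N ->
     dvdR q ((Gb F q) ^+ s) (psi j - \sum_(i | inI i) lam i * Amat i j)) /\
  (forall i, inI i -> nu q (lam i) != 0 ->
     (degH q (lam i))%:Z - (mnorm i)%:Z * twog1 <= (degH q (lam (mzero h l)))%:Z) /\
  (forall j, inJ j -> nu q (psi j) != 0 ->
     (degH q (psi j))%:Z - (mnorm j)%:Z * mH <= (degH q (lam (mzero h l)))%:Z) /\
  degH q (lam (mzero h l)) = tau.

Definition hatA (i j : mi h l) : 'M[{poly F}]_q := muM q (Amat i j) *m XiM F q.

Definition wdeg (p : {poly F}) (k : nat) : int := ((q * (size p).-1)%N + (k * q.+1)%N)%:Z.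

Definition sol2 (lam2 psi2 : mi h l -> 'I_q -> {poly F}) (D : int) : Prop :=
  ((exists i k, inI i /\ lam2 i k != 0) \/ (exists j k, inJ j /\ psi2 j k != 0)) /\
  (exists k, lam2 (mzero h l) k != 0 /\ wdeg (lam2 (mzero h l) k) k = D) /\
  (forall k, lam2 (mzero h l) k != 0 -> wdeg (lam2 (mzero h l) k) k <= D) /\
  (forall j, inJ j -> (mnorm j < s)%N -> forall kap : 'I_q,
     psi2 j kap = \sum_(i | inI i) \sum_(k < q) lam2 i k * hatA i j k kap) /\
  (forall j, inJ j -> (s <= mnorm j)%N -> forall kap : 'I_q,
     (Gpol F q ^+ s %| psi2 j kap - \sum_(i | inI i) \sum_(k < q) lam2 i k * hatA i j k kap)%R) /\
  (forall i, inI i -> forall k, lam2 i k != 0 ->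
     wdeg (lam2 i k) k - (mnorm i)%:Z * twog1 <= D) /\
  (forall j, inJ j -> forall kap, psi2 j kap != 0 ->
     wdeg (psi2 j kap) kap - (mnorm j)%:Z * mH <= D).

Definition monic2 (lam2 : mi h l -> 'I_q -> {poly F}) (D : int) : Prop :=
  forall k, lam2 (mzero h l) k != 0 -> wdeg (lam2 (mzero h l) k) k = D ->
    lead_coef (lam2 (mzero h l) k) = 1.
End Problems.

(* Main.v *)
Require Import Defs.
From HB Require Import structures.
From mathcomp Require Import all_boot all_order all_algebra.
From mathcomp Require Import zify ring.
Import Order.TTheory GRing.Theory Num.Theory.
Local Open Scope ring_scope.
Set Implicit Arguments. Unset Strict Implicit.

Section H.
Variable F : fieldType.
Variable q : nat.
Hypothesis q2 : (1 < q)%N.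
Implicit Types a b : {poly {poly F}}.

Lemma herm_eq : herm F q = 'X^q + ('X - ('X^(q.+1))%:P).
Proof. by rewrite /herm /hY /hX -rmorphXn addrA. Qed.

Lemma size_aux : size (('X - ('X^(q.+1))%:P) : {poly {poly F}}) = 2.
Proof. by rewrite size_XsubC. Qed.

Lemma herm_monic : herm F q \is monic.
Proof.
by rewrite herm_eq monicE lead_coefDl ?lead_coefXn // size_aux size_polyXn ltnS.
Qed.

Lemma size_herm : size (herm F q) = q.+1.
Proof.
by rewrite herm_eq size_polyDl ?size_polyXn // size_aux ltnS.
Qed.

Lemma herm_neq0 : herm F q != 0.
Proof. by rewrite -size_poly_eq0 size_herm. Qed.

Lemma size_nu a : (size (nu q a) <= q)%N.
Proof. by rewrite -ltnS -size_herm /nu Pdiv.CommonRing.ltn_rmodpN0 // herm_neq0. Qed.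

Lemma nuc_ge a k : (q <= k)%N -> nuc q a k = 0.
Proof. by move=> hk; rewrite /nuc nth_default // (leq_trans (size_nu a)). Qed.

Lemma nuK a : nu q (nu q a) = nu q a.
Proof. exact: Pdiv.RingMonic.rmodp_id herm_monic _. Qed.
Lemma nuD a b : nu q (a + b) = nu q a + nu q b.
Proof. exact: Pdiv.RingMonic.rmodpD herm_monic _ _. Qed.
Lemma nuB a b : nu q (a - b) = nu q a - nu q b.
Proof. exact: Pdiv.RingMonic.rmodpB herm_monic _ _. Qed.
Lemma nuC (c : {poly F}) a : nu q (c%:P * a) = c%:P * nu q a.
Proof. by rewrite !mul_polyC; exact: Pdiv.RingMonic.rmodpZ herm_monic _ _. Qed.
Lemma nu_sum (I : Type) (r : seq I) (P : pred I) (f : I -> {poly {poly F}}) :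
  nu q (\sum_(i <- r | P i) f i) = \sum_(i <- r | P i) nu q (f i).
Proof. exact: Pdiv.RingMonic.rmodp_sum herm_monic _ _ _ _. Qed.
Lemma nuM a b : nu q (a * b) = nu q (nu q a * nu q b).
Proof.
rewrite /nu Pdiv.RingMonic.rmodp_mulml ?herm_monic //.
by rewrite Pdiv.RingMonic.rmodp_mulmr ?herm_monic.
Qed.

Lemma nu_expand a : nu q a = \sum_(k < q) (nuc q a k)%:P * 'X^k.
Proof.
apply/polyP => i; rewrite coef_sum.
under eq_bigr => k _ do rewrite coefCM coefXn.
case: (ltnP i q) => hi.
  rewrite (bigD1 (Ordinal hi)) //= eqxx mulr1 big1 ?addr0 // => k hk.
  move: hk; rewrite -val_eqE /= eq_sym => /negbTE ->; by rewrite mulr0.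
rewrite big1; first by move: (@nuc_ge a i hi); rewrite /nuc.
move=> k _; have /gtn_eqF -> : (k < i)%N by apply: leq_trans (ltn_ord k) hi.
by rewrite mulr0.
Qed.

Lemma nu_eq0 a : (nu q a == 0) = [forall k : 'I_q, nuc q a k == 0].
Proof.
apply/idP/forallP => [/eqP H k|H]; first by rewrite /nuc H coef0.
apply/eqP.
by rewrite nu_expand big1 // => k _; rewrite (eqP (H k)) mul0r.
Qed.

Definition xi (m kap : nat) : {poly F} :=
  if (m < q)%N then (m == kap)%:R
  else if kap == (m - q)%N then 'X^(q.+1)
  else if kap == (m - q).+1 then -1 else 0.

Lemma nu_Xn m kap : (m < q.*2.-1)%N -> (nu q 'X^m)`_kap = xi m kap.
Proof.
move=> hm; rewrite /xi; case: ltnP => hmq.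
  rewrite /nu Pdiv.CommonRing.rmodp_small ?coefXn 1?eq_sym //.
  by rewrite size_polyXn size_herm ltnS.
set t := (m - q)%N.
have hmt : m = (t + q)%N by rewrite subnK.
have ht : (t.+2 <= q)%N.
  move: hm hmq; rewrite /t -addnn; lia.
have -> : ('X^m : {poly {poly F}}) = 'X^t * herm F q + (('X^(q.+1))%:P * 'X^t - 'X^(t.+1)).
  rewrite herm_eq hmt exprD (exprSr _ t).
  move: ('X^t) ('X^q) (('X^(q.+1))%:P) => A B C; ring.
rewrite /nu Pdiv.RingMonic.rmodp_addl_mul_small ?herm_monic //; last first.
  rewrite size_herm ltnS; apply: leq_trans (size_polyD _ _) _.
  rewrite geq_max size_polyN size_polyXn ht andbT.
  apply: leq_trans (size_polyMleq _ _) _; rewrite size_polyXn size_polyC.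
  case: (_ != 0) => /=; lia.
rewrite coefB coefCM !coefXn.
case: (eqVneq kap t) => [->|hk] /=.
  by rewrite mulr1 (ltn_eqF (ltnSn t)) subr0.
rewrite mulr0 sub0r; case: (eqVneq kap t.+1) => _ /=; rewrite ?oppr0 //.
Qed.

Lemma shift_sum (g : nat -> {poly F}) (k : 'I_q) :
  \sum_(c < q.*2.-1) (if ((k <= c) && (c < k + q))%N then g c else 0)
  = \sum_(t < q) g (t + k)%N.
Proof.
have hN : (k + q <= q.*2.-1)%N.
  have := ltn_ord k; rewrite -addnn; lia.
rewrite -(big_mkord xpredT (fun c => if ((k <= c) && (c < k + q))%N then g c else 0)) (big_cat_nat (leq0n k) (leq_trans (leq_addr q k) hN)) /=.
rewrite big1_seq ?add0r; last first.
  by move=> c; rewrite mem_index_iota => /andP[_ /andP[_ hc]]; rewrite leqNgt hc.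
rewrite (big_cat_nat (leq_addr q k) hN) /= [X in _ + X]big1_seq ?addr0; last first.
  by move=> c; rewrite mem_index_iota => /andP[_ /andP[hc _]]; rewrite ltnNge hc andbF.
rewrite -{1}[nat_of_ord k]add0n big_addn (addKn k q) big_mkord.
apply: eq_bigr => t _; rewrite leq_addl /= addnC ltn_add2l ltn_ord //.
Qed.

Lemma nuc_mul a b (kap : 'I_q) :
  nuc q (a * b) kap = \sum_(k < q) nuc q a k * (muM q b *m XiM F q) k kap.
Proof.
rewrite [LHS]/nuc nuM (nu_expand a) (nu_expand b) big_distrl /= nu_sum coef_sum.
apply: eq_bigr => k _.
rewrite big_distrr /= nu_sum coef_sum [in RHS]mxE.
under [in RHS]eq_bigr => c _ do rewrite !mxE.
rewrite (eq_bigr (fun c : 'I_q.*2.-1 => if ((k <= c) && (c < k + q))%N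
    then nuc q b (c - k) * xi c kap else 0)); last first.
  by move=> c _; case: ifP => _; rewrite ?mul0r.
rewrite (shift_sum (fun c => nuc q b (c - k) * xi c kap)) big_distrr /=; apply: eq_bigr => t _.
rewrite mulrACA -polyCM -exprD nuC coefCM nu_Xn; last first.
  have := ltn_ord k; have := ltn_ord t; rewrite -addnn; lia.
by rewrite addnK addnC mulrA.
Qed.

Definition W a (j : nat) : nat := ((size (nuc q a j)).-1 * q + j * q.+1)%N.

Lemma inner_max (p : {poly F}) c :
  \max_(i < size p | p`_i != 0) (i * q + c)%N =
  if p == 0 then 0%N else ((size p).-1 * q + c)%N.
Proof.
case: eqP => [->|/eqP hp]; first by rewrite size_poly0 big_ord0.
have hs : (0 < size p)%N by rewrite size_poly_gt0.
apply/eqP; rewrite eqn_leq; apply/andP; split.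
  apply/bigmax_leqP => i _; rewrite leq_add2r leq_mul2r; apply/orP; right.
  by rewrite -ltnS prednK.
have hl : ((size p).-1 < size p)%N by rewrite prednK.
apply: (leq_trans _ (@leq_bigmax_cond _ _ _ (Ordinal hl) _)) => //=.
by rewrite -lead_coefE lead_coef_eq0.
Qed.

Lemma degH_eq a : degH q a = \max_(j < q | nuc q a j != 0) W a j.
Proof.
rewrite /degH [RHS]big_mkcond /=; apply: eq_bigr => j _.
rewrite /coefH inner_max /W; by case: eqP.
Qed.

Lemma W_le a (j : 'I_q) : nuc q a j != 0 -> (W a j <= degH q a)%N.
Proof. by move=> hj; rewrite degH_eq; apply: (leq_bigmax_cond j). Qed.

Lemma degH_att a : nu q a != 0 ->
  exists j : 'I_q, nuc q a j != 0 /\ W a j = degH q a.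
Proof.
rewrite nu_eq0 => /forallPn [j0 hj0].
case: (@arg_maxnP _ j0 (fun j : 'I_q => nuc q a j != 0) (W a) hj0) => j hj hmax.
exists j; split => //; apply/eqP; rewrite eqn_leq W_le // degH_eq.
by apply/bigmax_leqP => i hi; exact: hmax.
Qed.

Lemma wdegW a (j : nat) : wdeg q (nuc q a j) j = (W a j)%:Z.
Proof. by rewrite /wdeg /W mulnC. Qed.

Lemma eqR_nuc a b : eqR q a b <-> forall kap : 'I_q, nuc q a kap = nuc q b kap.
Proof.
rewrite /eqR nuB; split => [/eqP|H].
  by rewrite subr_eq0 => /eqP H kap; rewrite /nuc H.
suff -> : nu q a = nu q b by rewrite subrr.
by rewrite (nu_expand a) (nu_expand b); apply: eq_bigr => k _; rewrite H.
Qed.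

Lemma dvdR_nuc (g : {poly F}) a :
  dvdR q (g%:P) a <-> forall kap : 'I_q, (g %| nuc q a kap)%R.
Proof.
split => [[c /eqR_nuc hc] kap|H].
  by rewrite hc /nuc nuC coefCM dvdp_mulIl.
exists (\sum_(k < q) (nuc q a k %/ g)%:P * 'X^k); rewrite /eqR.
have -> : g%:P * (\sum_(k < q) (nuc q a k %/ g)%:P * 'X^k) = nu q a.
  rewrite big_distrr (nu_expand a); apply: eq_bigr => k _.
  by rewrite /= mulrA -polyCM (mulrC g) divpK.
by rewrite nuB nuK subrr.
Qed.

Lemma nucB a b k : nuc q (a - b) k = nuc q a k - nuc q b k.
Proof. by rewrite /nuc nuB coefB. Qed.

Lemma nucS (I : finType) (P : pred I) (x y : I -> {poly {poly F}}) (kap : 'I_q) :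
  nuc q (\sum_(i | P i) x i * y i) kap =
  \sum_(i | P i) \sum_(k < q) nuc q (x i) k * (muM q (y i) *m XiM F q) k kap.
Proof.
rewrite /nuc nu_sum coef_sum; apply: eq_bigr => i _; exact: nuc_mul.
Qed.

End H.

Lemma GbX (F : fieldType) q s : Gb F q ^+ s = (Gpol F q ^+ s)%:P.
Proof. by rewrite /Gb rmorphXn. Qed.

Lemma inI0 h l s : (0 < s)%N -> inI s (mzero h l).
Proof.
move=> hs; rewrite /inI /mnorm big1 // => mu _; by rewrite ffunE.
Qed.

Lemma nucSA (F : fieldType) q (q2 : (1 < q)%N) h l (Rv : 'I_h -> {poly {poly F}})
  (P : pred (mi h l)) (lam : mi h l -> {poly {poly F}}) (j : mi h l) (kap : 'I_q) :
  nuc q (\sum_(i | P i) lam i * Amat q Rv i j) kap =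
  \sum_(i | P i) \sum_(k < q) nuc q (lam i) k * hatA q Rv i j k kap.
Proof. exact: (nucS q2 P lam (fun i => Amat q Rv i j)). Qed.

Theorem theorem6
  (F : finFieldType) (q : nat)
  (Hq : exists p k : nat, [/\ prime p, (0 < k)%N & q = (p ^ k)%N])
  (HF : #|F| = (q ^ 2)%N)
  (h : nat) (Hh : (0 < h)%N)
  (mH : int)
  (HmH : ((2 * genus q)%N%:Z - 2 < mH) && (mH < (q ^ 3)%N%:Z))
  (P : 'I_(q ^ 3) -> F * F) (HPinj : injective P)
  (HPcurve : forall k, (P k).2 ^+ q + (P k).2 = (P k).1 ^+ q.+1)
  (r : 'I_h -> 'I_(q ^ 3) -> F)
  (Rv : 'I_h -> {poly {poly F}})
  (HRdeg : forall mu, nu q (Rv mu) != 0 ->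
             (degH q (Rv mu) < (q ^ 3)%N + 2 * genus q)%N)
  (HRint : forall mu k, evalP (Rv mu) (P k) = r mu k)
  (s l : nat) (Hs : (0 < s)%N) (Hsl : (s <= l)%N)
  (tau : nat)
  (lam psi : mi h l -> {poly {poly F}}) :
  sol1 q s mH Rv lam psi tau <->
  (sol2 s mH Rv (fun i (k : 'I_q) => nuc q (lam i) k) (fun j (k : 'I_q) => nuc q (psi j) k)
        tau%:Z /\
   monic2 (fun i (k : 'I_q) => nuc q (lam i) k) tau%:Z).
Proof.
have q2 : (1 < q)%N.
  case: Hq => p [k [pp k0 ->]]; by rewrite -(exp1n k) ltn_exp2r // prime_gt1.
have hI0 : inI s (mzero h l) := @inI0 h l s Hs.
split.
- case=> [hm [he [hd [hl [hp htau]]]]].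
  have hnz : nu q (lam (mzero h l)) != 0 := hm.1.
  split; [split; [|split; [|split; [|split; [|split; [|split]]]]]|].
  + left; have [j [hj _]] := degH_att q2 hnz.
    by exists (mzero h l), j.
  + have [j [hj hW]] := degH_att q2 hnz.
    by exists j; split => //; rewrite /= wdegW hW htau.
  + move=> k hk /=; rewrite wdegW lez_nat -htau; exact: W_le.
  + move=> j hj hjs kap /=.
    have := (eqR_nuc q2 _ _).1 (he j hj hjs) kap.
    by rewrite (nucSA q2).
  + move=> j hj hjs kap /=.
    have := (dvdR_nuc q2 _ _).1 (eq_ind _ (fun G => dvdR q G _) (hd j hj hjs) _ (GbX F q s)) kap.
    by rewrite (nucB q2) (@nucSA F q q2).
  + move=> i hi k hk /=.
    have hnzi : nu q (lam i) != 0 by rewrite (nu_eq0 q2); apply/forallPn; exists k.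
    rewrite -htau; apply: le_trans (hl i hi hnzi) ; rewrite lerD2r wdegW lez_nat; exact: W_le.
  + move=> j hj k hk /=.
    have hnzj : nu q (psi j) != 0 by rewrite (nu_eq0 q2); apply/forallPn; exists k.
    rewrite -htau; apply: le_trans (hp j hj hnzj); rewrite lerD2r wdegW lez_nat; exact: W_le.
  + move=> k /= hk; rewrite wdegW => /eqP; rewrite eqz_nat -htau => /eqP hW.
    have hs : (0 < size (nuc q (lam (mzero h l)) k))%N by rewrite size_poly_gt0.
    rewrite lead_coefE; apply: hm.2 => //.
      by rewrite /coefH -lead_coefE lead_coef_eq0.
- case=> [[hnt [[k0 [hk0 hw0]] [hmax [he [hd [hl hp]]]]]] hmon].
  have hnz : nu q (lam (mzero h l)) != 0 by rewrite (nu_eq0 q2); apply/forallPn; exists k0.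
  have htau : degH q (lam (mzero h l)) = tau.
    have [j [hj hW]] := degH_att q2 hnz.
    apply/eqP; rewrite eqn_leq; apply/andP; split.
      by rewrite -hW -lez_nat -wdegW; apply: hmax.
    by rewrite -lez_nat -hw0 /= wdegW lez_nat; apply: W_le.
  split; [split => // i j hj hc hdeg|split; [|split; [|split; [|split]]]] => //.
  + have hcj : nuc q (lam (mzero h l)) j != 0 by apply: contra hc => /eqP; rewrite /coefH => ->; rewrite coef0.
    have hsz : (i < size (nuc q (lam (mzero h l)) j))%N.
      by rewrite ltnNge; apply: contra hc => hh; rewrite /coefH nth_default.
    have hle := @W_le _ q _ (Ordinal hj) hcj.
    rewrite /= -hdeg /W leq_add2r leq_pmul2r ?(ltnW q2) // in hle.
    have hi : i = (size (nuc q (lam (mzero h l)) j)).-1.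
      apply/eqP; rewrite eqn_leq hle andbT -ltnS prednK //; exact: leq_ltn_trans (leq0n i) hsz.
    rewrite /coefH hi -lead_coefE; apply: (hmon (Ordinal hj)) => //.
    by rewrite /= wdegW -htau -hdeg /W -hi.
  + move=> j hj hjs; apply/(eqR_nuc q2) => kap.
    rewrite (nucSA q2); exact: he j hj hjs kap.
  + move=> j hj hjs; rewrite GbX; apply/(dvdR_nuc q2) => kap.
    rewrite (nucB q2) (@nucSA F q q2); exact: hd j hj hjs kap.
  + move=> i hi hnzi; have [j [hj hW]] := degH_att q2 hnzi.
    rewrite htau -hW -wdegW; exact: hl i hi j hj.
  + move=> j hj hnzj; have [k [hk hW]] := degH_att q2 hnzj.
    rewrite htau -hW -wdegW; exact: hp j hj k hk.
Qed.
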